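(* Let $\rho$ be a left-c.e. semi-measure. If $X\in2^\omega$ is computable and $X\in\mathsf{W2R}_\rho$, then $\inf_n\rho(X{\upharpoonright}n)>0$.
   Context: $2^{<\omega}$ is the set of finite binary strings, $\varepsilon$ the empty string, $X{\upharpoonright}n$ the first $n$ bits of $X$, $[\![\sigma]\!]=\{X\in2^\omega:\sigma\preceq X\}$, $[\![S]\!]=\bigcup_{\sigma\in S}[\![\sigma]\!]$. A semi-measure is $\rho:2^{<\omega}\to[0,1]$ with $\rho(\varepsilon)=1$ and $\rho(\sigma)\ge\rho(\sigma0)+\rho(\sigma1)$; left-c.e. means its values are uniformly approximable from below by computable non-decreasing rational sequences. For $E\subseteq2^{<\omega}$, $\rho(E)=\sum_{\sigma\in E}\rho(\sigma)$. $X\in\mathsf{W2R}_\rho$ iff $X\notin\bigcap_i[\![U_i]\!]$ for every uniformly c.e. sequence $(U_i)$ of subsets of $2^{<\omega}$ with $\lim_i\rho(U_i)=0$. *)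

(* Defs.v *)
From HB Require Import structures.
From mathcomp Require Import all_boot all_order all_algebra.
From mathcomp Require Import all_classical all_reals all_analysis.

Set Implicit Arguments.
Unset Strict Implicit.
Unset Printing Implicit Defensive.

Import Order.TTheory GRing.Theory Num.Theory.
Import numFieldNormedType.Exports.
Local Open Scope classical_set_scope.
Local Open Scope ring_scope.

(* Codes act on argument lists; [Proj i] returns the i-th argument (0 if absent). *)
Inductive prf : Type :=
| PZero : prf
| PSucc : prf
| PProj : nat -> prf
| PComp : prf -> seq prf -> prf
| PRec  : prf -> prf -> prf
| PMu   : prf -> prf.

Inductive eval : prf -> seq nat -> nat -> Prop :=
| evZero xs : eval PZero xs 0
| evSucc xs : eval PSucc xs (head 0%N xs).+1
| evProj i xs : eval (PProj i) xs (nth 0%N xs i)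
| evComp f gs xs ys y : evals gs xs ys -> eval f ys y -> eval (PComp f gs) xs y
| evRec0 f g xs y : eval f xs y -> eval (PRec f g) (0%N :: xs) y
| evRecS f g n xs y z :
    eval (PRec f g) (n :: xs) y -> eval g (n :: y :: xs) z ->
    eval (PRec f g) (n.+1 :: xs) z
| evMu f xs n :
    eval f (n :: xs) 0 ->
    (forall m, (m < n)%N -> exists k, eval f (m :: xs) k.+1) ->
    eval (PMu f) xs n
with evals : seq prf -> seq nat -> seq nat -> Prop :=
| evsNil xs : evals [::] xs [::]
| evsCons g gs xs y ys : eval g xs y -> evals gs xs ys -> evals (g :: gs) xs (y :: ys).

(* Bijective coding of finite binary strings by natural numbers. *)
Fixpoint code_str (s : seq bool) : nat :=
  match s with
  | [::] => 0%N
  | b :: s' => ((code_str s').*2 + 1 + b)%N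
  end.

Definition prefixn (X : nat -> bool) (n : nat) : seq bool := mkseq X n.

Definition cyl (s : seq bool) : set (nat -> bool) :=
  [set X | prefixn X (size s) = s].

Definition cylS (S : set (seq bool)) : set (nat -> bool) :=
  \bigcup_(s in S) cyl s.

Definition computable_seq (X : nat -> bool) : Prop :=
  exists e, forall n, eval e [:: n] (nat_of_bool (X n)).

Definition unif_ce (U : nat -> set (seq bool)) : Prop :=
  exists e, forall i s, U i s <-> exists y, eval e [:: i; code_str s] y.

Section Measures.
Variable R : realType.

Definition semi_measure (rho : seq bool -> R) : Prop :=
  [/\ forall s, 0 <= rho s <= 1,
      rho [::] = 1 &
      forall s, rho (rcons s false) + rho (rcons s true) <= rho s].

Definition left_ce (rho : seq bool -> R) : Prop :=
  exists (enu eden : prf) (num den : nat -> nat -> nat),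
    (forall c s, eval enu [:: c; s] (num c s) /\ eval eden [:: c; s] (den c s)) /\
    forall sg,
      let q := fun s : nat =>
        ratr ((num (code_str sg) s)%:Q / (den (code_str sg) s).+1%:Q) : R in
      (forall s, q s <= q s.+1) /\ q @ \oo --> rho sg.

Definition rho_set (rho : seq bool -> R) (E : set (seq bool)) : \bar R :=
  (\esum_(s in E) (rho s)%:E)%E.

Definition W2R (rho : seq bool -> R) : set (nat -> bool) :=
  [set X | forall U : nat -> set (seq bool),
      unif_ce U -> (fun i => rho_set rho (U i)) @ \oo --> 0%E ->
      ~ (\bigcap_i cylS (U i)) X].

End Measures.

(* Main.v *)
Require Import Defs.
From HB Require Import structures.
From mathcomp Require Import all_boot all_order all_algebra.
From mathcomp Require Import all_classical all_reals all_analysis.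
From mathcomp Require Import lra zify.
Import Order.TTheory GRing.Theory Num.Theory.
Import numFieldNormedType.Exports.
Local Open Scope classical_set_scope.
Local Open Scope ring_scope.
Notation eval := Defs.eval.
Notation evals := Defs.evals.
Local Open Scope nat_scope.

Fixpoint prf_ind2 (P : prf -> Prop) (H0 : P PZero) (HS : P PSucc)
  (HP : forall i, P (PProj i))
  (HC : forall f gs, P f -> foldr (fun g acc => P g /\ acc) True gs -> P (PComp f gs))
  (HR : forall f g, P f -> P g -> P (PRec f g))
  (HM : forall f, P f -> P (PMu f)) (p : prf) {struct p} : P p :=
  match p with
  | PZero => H0
  | PSucc => HS
  | PProj i => HP i
  | PComp f gs => HC f gs (prf_ind2 P H0 HS HP HC HR HM f)
      ((fix F (gs : seq prf) : foldr (fun g acc => P g /\ acc) True gs :=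
          match gs return foldr (fun g acc => P g /\ acc) True gs with
          | [::] => I
          | g :: gs' => conj (prf_ind2 P H0 HS HP HC HR HM g) (F gs')
          end) gs)
  | PRec f g => HR f g (prf_ind2 P H0 HS HP HC HR HM f) (prf_ind2 P H0 HS HP HC HR HM g)
  | PMu f => HM f (prf_ind2 P H0 HS HP HC HR HM f)
  end.

Definition det (p : prf) := forall xs y y', eval p xs y -> eval p xs y' -> y = y'.

Lemma evals_det gs : foldr (fun g acc => det g /\ acc) True gs ->
  forall xs ys ys', evals gs xs ys -> evals gs xs ys' -> ys = ys'.
Proof.
elim: gs => [|g gs IH] /= Hd xs ys ys' H1 H2.
  by inversion H1; inversion H2.
case: Hd => Hg Hgs.
inversion H1; subst; inversion H2; subst.
by rewrite (Hg _ _ _ H3 H4) (IH Hgs _ _ _ H6 H8).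
Qed.

Lemma eval_det p : det p.
Proof.
elim/prf_ind2: p.
- by move=> xs y y' H1 H2; inversion H1; inversion H2.
- by move=> xs y y' H1 H2; inversion H1; inversion H2.
- by move=> i xs y y' H1 H2; inversion H1; inversion H2.
- move=> f gs Hf Hgs xs y y' H1 H2; inversion H1; subst; inversion H2; subst.
  have E := evals_det gs Hgs _ _ _ H3 H4; subst.
  exact: (Hf _ _ _ H6 H8).
- move=> f g Hf Hg.
  have key : forall n xs y y', eval (PRec f g) (n :: xs) y -> eval (PRec f g) (n :: xs) y' -> y = y'.
    elim=> [|n IH] xs y y' H1 H2.
      inversion H1; subst; inversion H2; subst; exact: (Hf _ _ _ H5 H6).
    inversion H1; subst; inversion H2; subst.
    have E := IH _ _ _ H6 H8; subst.
    exact: (Hg _ _ _ H7 H9).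
  move=> [|n xs] y y' H1 H2; first by inversion H1.
  exact: (key _ _ _ _ H1 H2).
- move=> f Hf xs y y' H1 H2; inversion H1; subst; inversion H2; subst.
  case: (ltngtP y y') => // h.
  + have [k Hk] := H5 _ h.
    by have := Hf _ _ _ H0 Hk.
  + have [k Hk] := H3 _ h.
    by have := Hf _ _ _ H4 Hk.
Qed.

Lemma evP i xs v : nth 0 xs i = v -> eval (PProj i) xs v.
Proof. by move <-; apply: evProj. Qed.

Lemma evC1 f g xs a y : eval g xs a -> eval f [:: a] y -> eval (PComp f [:: g]) xs y.
Proof. move=> H1 H2; apply: evComp H2; apply: evsCons H1 (evsNil _). Qed.

Lemma evC2 f g h xs a b y : eval g xs a -> eval h xs b -> eval f [:: a; b] y ->
  eval (PComp f [:: g; h]) xs y.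
Proof.
move=> H1 H2 H3; apply: evComp H3; apply: evsCons H1 _; apply: evsCons H2 (evsNil _).
Qed.

Lemma evS a : eval PSucc [:: a] a.+1.
Proof. exact: (evSucc [:: a]). Qed.

Lemma evR f g xs (H : nat -> nat) : eval f xs (H 0) ->
  (forall n, eval g (n :: H n :: xs) (H n.+1)) -> forall n, eval (PRec f g) (n :: xs) (H n).
Proof. move=> H0 HS; elim=> [|n IH]; [exact: evRec0 | exact: evRecS IH (HS n)]. Qed.

Definition padd := PRec (PProj 0) (PComp PSucc [:: PProj 1]).
Lemma padd_ok n m : eval padd [:: n; m] (n + m).
Proof.
apply: (@evR _ _ _ (fun n => n + m)); first exact: evP.
by move=> k; apply: evC1; [exact: evP | exact: evS].
Qed.

Definition pmul := PRec PZero (PComp padd [:: PProj 2; PProj 1]).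
Lemma pmul_ok n m : eval pmul [:: n; m] (n * m).
Proof.
apply: (@evR _ _ _ (fun n => n * m)); first exact: evZero.
move=> k; apply: evC2; [exact: evP | exact: evP |].
by rewrite mulSn; apply: padd_ok.
Qed.

Definition ppow2 := PRec (PComp PSucc [:: PZero]) (PComp padd [:: PProj 1; PProj 1]).
Lemma ppow2_ok n : eval ppow2 [:: n] (2 ^ n).
Proof.
apply: (@evR _ _ _ (fun n => 2 ^ n)); first by apply: evC1; [exact: evZero | exact: evS].
move=> k; apply: evC2; [exact: evP | exact: evP |].
by rewrite expnS mul2n -addnn; apply: padd_ok.
Qed.

Definition ppred := PRec PZero (PProj 0).
Lemma ppred_ok n : eval ppred [:: n] n.-1.
Proof.
apply: (@evR _ _ _ (fun n => n.-1)); first exact: evZero.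
by move=> k; apply: evP.
Qed.

Definition psub := PRec (PProj 0) (PComp ppred [:: PProj 1]).
Lemma psub_ok n m : eval psub [:: n; m] (m - n).
Proof.
apply: (@evR _ _ _ (fun n => m - n)); first by apply: evP; rewrite subn0.
move=> k; apply: evC1; first exact: evP.
by rewrite subnS; apply: ppred_ok.
Qed.

Lemma code_rcons s b : code_str (rcons s b) = code_str s + 2 ^ size s * (b.+1).
Proof.
elim: s => [|a s IH] /=; first by rewrite expn0 mul1n; case: b.
rewrite IH expnS; rewrite -!muln2; lia.
Qed.

Lemma code_inj s t : code_str s = code_str t -> s = t.
Proof.
elim: s t => [|a s IH] [|b t] //=; rewrite -?muln2; try lia.
move=> E; have Eab : a = b by case: a b E => [] [] /=; lia.
subst; congr (_ :: _); apply: IH; lia.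
Qed.

Definition pcode (eX : prf) := PRec PZero
  (PComp padd [:: PProj 1; PComp pmul [:: PComp ppow2 [:: PProj 0];
                                        PComp PSucc [:: PComp eX [:: PProj 0]]]]).

Lemma pcode_ok (X : nat -> bool) eX : (forall n, eval eX [:: n] (nat_of_bool (X n))) ->
  forall i xs, eval (pcode eX) (i :: xs) (code_str (prefixn X i)).
Proof.
move=> HX i xs.
apply: (@evR _ _ _ (fun i => code_str (prefixn X i))); first exact: evZero.
move=> k; apply: evC2; first exact: evP.
  apply: evC2.
  - apply: evC1; [exact: evP | exact: ppow2_ok].
  - apply: evC1; last exact: evS.
    by apply: evC1; [exact: evP | exact: HX].
  - exact: pmul_ok.
rewrite /prefixn mkseqS code_rcons size_mkseq; exact: padd_ok.
Qed.

Definition pdist eX :=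
  PComp padd [:: PComp psub [:: PProj 2; PComp (pcode eX) [:: PProj 1]];
                 PComp psub [:: PComp (pcode eX) [:: PProj 1]; PProj 2]].

Lemma pdist_ok (X : nat -> bool) eX : (forall n, eval eX [:: n] (nat_of_bool (X n))) ->
  forall n i c, eval (pdist eX) [:: n; i; c]
     ((code_str (prefixn X i) - c) + (c - code_str (prefixn X i))).
Proof.
move=> HX n i c; apply: evC2; last exact: padd_ok.
- apply: evC2; [exact: evP | | exact: psub_ok].
  by apply: evC1; [exact: evP | exact: pcode_ok].
- apply: evC2; [ | exact: evP | exact: psub_ok].
  by apply: evC1; [exact: evP | exact: pcode_ok].
Qed.

Lemma ce_prefix (X : nat -> bool) : computable_seq X ->
  unif_ce (fun i => [set s | s = prefixn X i]).
Proof.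
case=> eX HX; exists (PMu (pdist eX)) => i s; split.
- move=> /= ->; exists 0; apply: evMu => //.
  by have := @pdist_ok X eX HX 0 i (code_str (prefixn X i)); rewrite subnn.
- case=> y Hy; inversion Hy; subst.
  have := eval_det _ _ _ _ H0 (@pdist_ok X eX HX y i (code_str s)) => E.
  by apply: code_inj; lia.
Qed.
Local Open Scope ring_scope.
Lemma prefixnS X n : prefixn X n.+1 = rcons (prefixn X n) (X n).
Proof. exact: mkseqS. Qed.

Theorem proposition5p10 (R : realType) (rho : seq bool -> R)
    (Hsm : semi_measure rho) (Hlce : left_ce rho)
    (X : nat -> bool) (HXc : computable_seq X) (HXw : W2R rho X) :
  0 < inf (range (fun n => rho (prefixn X n))).
Proof.
rewrite /semi_measure in Hsm; case: Hsm => H01 H1 Hsub.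
pose r := fun n => rho (prefixn X n).
have r0 n : 0 <= r n by case/andP: (H01 (prefixn X n)).
have rS n : r n.+1 <= r n.
  rewrite /r prefixnS.
  have := Hsub (prefixn X n).
  have := H01 (rcons (prefixn X n) false); have := H01 (rcons (prefixn X n) true).
  by case: (X n) => /andP[? ?] /andP[? ?]; lra.
have rmon : {homo r : n m / (n <= m)%N >-> m <= n}.
  move=> n m; elim: m => [|m IH]; first by rewrite leqn0 => /eqP ->.
  rewrite leq_eqVlt => /orP[/eqP -> //|]; rewrite ltnS => /IH h.
  exact: le_trans (rS m) h.
have hlb : has_lbound (range r) by exists 0 => _ [n _ <-].
have ige : 0 <= inf (range r).
  by apply: lb_le_inf; [exists (r 0%N), 0%N | move=> _ [n _ <-]].
rewrite lt_neqAle ige andbT; apply/negP => /eqP i0.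
have cr : r @ \oo --> 0 by rewrite i0; exact: nonincreasing_cvgn.
apply: (HXw (fun i => [set s | s = prefixn X i])).
- exact: ce_prefix.
- have -> : (fun i => rho_set rho [set s | s = prefixn X i]) = (fun i => (r i)%:E).
    apply/funext => i. rewrite /rho_set.
    change (\esum_(s in [set prefixn X i]) (rho s)%:E = (r i)%:E)%E.
    rewrite esum_set1 //; rewrite lee_fin; exact: r0.
  by apply: cvg_EFin => //; near=> n.
- move=> i _; exists (prefixn X i) => //.
  by rewrite /cyl /= /prefixn size_mkseq.
Unshelve. all: by end_near.
Qed.
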